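(* In the setting of the non-linear gradient flow (i) above, fix two indices $\lambda,\lambda'\in\{1,\dots,r_X\}$ with $y_\lambda>0$, $y_{\lambda'}>0$ and $\tilde y_\lambda\neq\tilde y_{\lambda'}$, and fix $\epsilon\in(0,\theta^\ast_\lambda)$. Suppose the initialization is $\theta^0_\kappa=\sigma\tilde\theta^0_\kappa$ for $\kappa\in\{\lambda,\lambda'\}$, with fixed $\tilde\theta^0_\kappa>0$ and a scale $\sigma>0$ small enough that $\theta^0_\lambda<\theta^\ast_\lambda-\epsilon$ and $\theta^0_{\lambda'}<\theta^\ast_{\lambda'}$. Let $t_\lambda=t_\lambda(\epsilon,\sigma)$ be the (unique) time at which $|\theta_\lambda(t)-\theta^\ast_\lambda|=\epsilon$. Then $$\lim_{\sigma\to 0}\theta_{\lambda'}(t_\lambda)=\begin{cases}\theta^\ast_{\lambda'} & \text{if } \tilde y_{\lambda'}>\tilde y_\lambda,\\ 0 & \text{if } \tilde y_{\lambda'}<\tilde y_\lambda.\end{cases}$$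
   Context: Setting: $\bm X=\sum_{\lambda=1}^{r_X}\sqrt{\mu_\lambda}\bm u_\lambda\bm v_\lambda^\top$ (SVD, $\mu_\lambda>0$ for $\lambda\le r_X$), labels $\bm y$ with $y_\lambda=\bm u_\lambda^\top\bm y\ge0$, $\theta^\ast_\lambda=y_\lambda/\sqrt{\mu_\lambda}$, $\tilde y_\lambda=\sqrt{\mu_\lambda}y_\lambda$. The non-linear dynamics is gradient flow on $\mathbf w$ of $\ell(\mathbf w)=\frac12\|\bm X\bm\theta(\mathbf w)-\bm y\|^2$ with $\bm\theta(\mathbf w)=\frac12\sum_\lambda w_\lambda^2\bm v_\lambda$, whose components are $\theta_\kappa(t)=\dfrac{\theta^0_\kappa\theta^\ast_\kappa}{\theta^0_\kappa-e^{-2\tilde y_\kappa t}(\theta^0_\kappa-\theta^\ast_\kappa)}$ for $\theta^\ast_\kappa\neq0$, where $\theta^0_\kappa=\frac12(w^0_\kappa)^2$. *)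

(* Defs.v *)
From mathcomp Require Import all_boot all_order all_algebra.
From mathcomp Require Import all_classical all_reals all_analysis.
Set Implicit Arguments. Unset Strict Implicit. Unset Printing Implicit Defensive.
Import Order.TTheory GRing.Theory Num.Theory.
Local Open Scope ring_scope.

Definition thetastar (R : realType) (r : nat) (mu y : 'I_r -> R) (k : 'I_r) : R :=
  y k / Num.sqrt (mu k).

Definition ytilde (R : realType) (r : nat) (mu y : 'I_r -> R) (k : 'I_r) : R :=
  Num.sqrt (mu k) * y k.

(* Closed-form component of the non-linear gradient flow (case theta*_k <> 0):
   theta_k(t) = th0 * ths / (th0 - exp(-2 yt t) (th0 - ths)), ths = theta star. *)
Definition theta_flow (R : realType) (r : nat) (mu y th0 : 'I_r -> R)
    (k : 'I_r) (t : R) : R :=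
  th0 k * thetastar mu y k /
    (th0 k - expR (- (2 * ytilde mu y k * t)) * (th0 k - thetastar mu y k)).

(* Main.v *)
Require Import Defs.
From mathcomp Require Import all_boot all_order all_algebra.
From mathcomp Require Import all_classical all_reals all_analysis.
From mathcomp Require Import ring lra.
Import Order.TTheory GRing.Theory Num.Theory.
Import numFieldNormedType.Exports.
Local Open Scope ring_scope.
Local Open Scope classical_set_scope.
Lemma id_cvg0 (R : realType) : (fun s : R => s) @ (0:R)^'+ --> (0:R).
Proof. exact: (cvg_at_right_filter cvg_id). Qed.

Lemma limA (R : realType) (k c a v0 : R) (v : R -> R) : 1 < k -> 0 < c -> 0 < a ->
  v s @[s --> (0:R)^'+] --> v0 ->
  (fun s => s*c*a/(s*c - s`^k * v s * (s*c - a))) @ (0:R)^'+ --> a.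
Proof.
move=> k1 c0 a0 hv.
have e : {near (0:R)^'+, (fun s => c*a/(c - s`^(k-1) * v s * (s*c - a))) =1
  (fun s => s*c*a/(s*c - s`^k * v s * (s*c - a)))}.
  near=> s.
  have s0 : 0 < s by near: s; exact: nbhs_right_gt.
  rewrite -[s `^ k](mulr_powRB1 (ltW s0)); last exact: lt_trans k1.
  have -> : s * c - s * s `^ (k - 1) * v s * (s * c - a) =
     s * (c - s `^ (k - 1) * v s * (s * c - a)) by ring.
  set D := (c - _).
  have [->|D0] := eqVneq D 0; first by rewrite !(mulr0,invr0).
  by field; rewrite D0 gt_eqF.
apply: cvg_trans; first exact: (near_eq_cvg e).
have la : c * a / (c - 0 * v0 * (0 * c - a)) = a.
  by rewrite !mul0r subr0 mulrAC divff ?mul1r // gt_eqF.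
suff : (fun s => c*a/(c - s`^(k-1) * v s * (s*c - a))) @ (0:R)^'+ -->
   c * a / (c - 0 * v0 * (0 * c - a)) by rewrite la.
apply: cvgM; first exact: cvg_cst.
apply: cvgV; first by rewrite mul0r mul0r subr0 gt_eqF.
apply: cvgB; first exact: cvg_cst.
apply: cvgM; first apply: cvgM.
- by apply: powR_cvg0; rewrite subr_gt0.
- exact: hv.
apply: cvgB; last exact: cvg_cst.
by apply: cvgM; [exact: id_cvg0 | exact: cvg_cst].
Unshelve. all: by end_near. Qed.

Lemma algB (R : realType) (P Q c a w X : R) : 0 < P ->
  Q*c*a/(Q*c - w*X) = (P*Q)*c*a/((P*Q)*c - P*w*X).
Proof.
move=> P0.
have -> : P * Q * c - P * w * X = P * (Q*c - w*X) by ring.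
set D := (Q*c - w*X).
have [->|D0] := eqVneq D 0; first by rewrite !(mulr0,invr0).
by field; rewrite D0 gt_eqF.
Qed.

Lemma limB (R : realType) (k c a v0 : R) (v : R -> R) : 0 < k -> k < 1 -> 0 < c -> 0 < a ->
  0 < v0 -> v s @[s --> (0:R)^'+] --> v0 ->
  (fun s => s*c*a/(s*c - s`^k * v s * (s*c - a))) @ (0:R)^'+ --> 0.
Proof.
move=> k0 k1 c0 a0 v00 hv.
have e : {near (0:R)^'+, (fun s => s`^(1-k)*c*a/(s`^(1-k)*c - v s * (s*c - a))) =1
  (fun s => s*c*a/(s*c - s`^k * v s * (s*c - a)))}.
  near=> s.
  have s0 : 0 < s by near: s; exact: nbhs_right_gt.
  have hs : s`^k * s`^(1-k) = s.
    rewrite -powRD; last by apply/implyP => _; rewrite gt_eqF.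
    by rewrite addrC subrK powRr1 // ltW.
  by rewrite /= (@algB _ (s`^k)) ?hs // powR_gt0.
apply: cvg_trans; first exact: (near_eq_cvg e).
have la : 0 * c * a / (0 * c - v0 * (0 * c - a)) = 0.
  by rewrite !mul0r.
suff : (fun s => s`^(1-k)*c*a/(s`^(1-k)*c - v s * (s*c - a))) @ (0:R)^'+ -->
   0 * c * a / (0 * c - v0 * (0 * c - a)) by rewrite la.
apply: cvgM.
  apply: cvgMl; apply: cvgMl; apply: powR_cvg0; by rewrite subr_gt0.
apply: cvgV.
  by rewrite !mul0r !sub0r mulrN opprK mulf_neq0 // gt_eqF.
apply: cvgB.
  apply: cvgMl; apply: powR_cvg0; by rewrite subr_gt0.
apply: cvgM; first exact: hv.
apply: cvgB; last exact: cvg_cst.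
by apply: cvgM; [exact: id_cvg0 | exact: cvg_cst].
Unshelve. all: by end_near. Qed.

Lemma solveE (R : realType) (a eps c s E : R) : 0 < eps -> eps < a -> 0 < s -> 0 < c ->
  s * c < a - eps -> 0 < E ->
  `|s*c*a/(s*c - E*(s*c-a)) - a| = eps ->
  E = s * (c*eps/((a-eps)*(a-s*c))).
Proof.
move=> e0 ea s0 c0 sc E0 H.
set D := s*c - E*(s*c-a) in H.
set th := s*c*a/D in H.
have D0 : D != 0.
  apply/negP => /eqP D0; move: H; rewrite /th D0 invr0 mulr0 sub0r normrN.
  by rewrite gtr0_norm ?(lt_trans e0) // => h; move: ea; rewrite h ltxx.
have thD : th * D = s*c*a by rewrite /th divfK.
have Z0 : (a-eps)*(a-s*c) != 0.
  by rewrite mulf_neq0 // gt_eqF // subr_gt0 // (lt_trans sc) // gtrBl.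
have Ep : 0 < E * (a - s*c) by rewrite mulr_gt0 // subr_gt0 (lt_trans sc) // gtrBl.
have scp : 0 < s*c by rewrite mulr_gt0.
case: (lerP 0 (th - a)) => h.
  rewrite ger0_norm // in H.
  have tha : th = a + eps by rewrite -H; ring.
  rewrite tha /D in thD.
  have : 0 < (a+eps) * (E*(a-s*c)) by rewrite mulr_gt0 // addr_gt0 // (lt_trans e0).
  nra.
rewrite ltr0_norm // in H.
have tha : th = a - eps by rewrite -H; ring.
rewrite tha /D in thD.
have hEZ : E * ((a-eps)*(a-s*c)) = s*c*eps by nra.
rewrite -(mulfK Z0 E) hEZ.
by rewrite !mulrA.
Qed.

Lemma theta_eqs (R : realType) (a eps c b b' c' a' t s : R) :
  0 < eps -> eps < a -> 0 < s -> 0 < c -> s * c < a - eps -> 0 < b ->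
  `|s*c*a/(s*c - expR (- (2 * b * t))*(s*c-a)) - a| = eps ->
  s*c'*a'/(s*c' - expR (- (2 * b' * t)) * (s*c' - a')) =
  s*c'*a'/(s*c' - s`^(b'/b) * expR (b'/b * ln (c*eps/((a-eps)*(a-s*c)))) * (s*c' - a')).
Proof.
move=> e0 ea s0 c0 sc b0 H.
have hE := @solveE _ _ _ _ _ _ e0 ea s0 c0 sc (expR_gt0 _) H.
have up : 0 < c*eps/((a-eps)*(a-s*c)).
  by rewrite divr_gt0 ?mulr_gt0 // subr_gt0 // (lt_trans sc) // gtrBl.
have -> : - (2 * b' * t) = (- (2 * b * t)) * (b'/b) by field; rewrite gt_eqF.
rewrite (expRM (- (2 * b * t))) hE powRM ?ltW //.
by rewrite [X in s `^ _ * X]/powR gt_eqF // mulrC.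
Qed.

Lemma limv (R : realType) (k a eps c : R) : 0 < eps -> eps < a -> 0 < c ->
  (fun s => expR (k * ln (c*eps/((a-eps)*(a-s*c))))) @ (0:R)^'+ -->
     expR (k * ln (c*eps/((a-eps)*(a-0*c)))).
Proof.
move=> e0 ea c0.
have u0 : 0 < c*eps/((a-eps)*(a-0*c)).
  by rewrite mul0r subr0 divr_gt0 ?mulr_gt0 // ?subr_gt0 // (lt_trans e0).
apply: (continuous_cvg _ (@continuous_expR R _)).
apply: cvgMl_tmp.
apply: (continuous_cvg _ (continuous_ln u0)).
apply: cvgM; first exact: cvg_cst.
apply: cvgV.
  by rewrite mul0r subr0 mulf_neq0 // gt_eqF // ?subr_gt0 // (lt_trans e0).
apply: cvgM; first exact: cvg_cst.
apply: cvgB; first exact: cvg_cst.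
by apply: cvgM; [exact: id_cvg0 | exact: cvg_cst].
Qed.

Theorem mainTheorem2 (R : realType) (r : nat) (mu y : 'I_r -> R)
    (l l' : 'I_r) (eps : R) (th0t : 'I_r -> R) (T : R -> R) :
  (forall k, 0 < mu k) ->
  (forall k, 0 <= y k) ->
  0 < y l -> 0 < y l' ->
  ytilde mu y l != ytilde mu y l' ->
  0 < eps -> eps < thetastar mu y l ->
  0 < th0t l -> 0 < th0t l' ->
  (* T s is the time t_lambda(eps, s) at which |theta_l(t) - theta*_l| = eps,
     for every admissible scale s *)
  (forall s : R, 0 < s ->
     s * th0t l < thetastar mu y l - eps ->
     s * th0t l' < thetastar mu y l' ->
     `|theta_flow mu y (fun k => s * th0t k) l (T s) - thetastar mu y l| = eps) ->
  (ytilde mu y l < ytilde mu y l' ->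
     theta_flow mu y (fun k => s * th0t k) l' (T s) @[s --> (0 : R)^'+]
       --> (thetastar mu y l' : R)) /\
  (ytilde mu y l' < ytilde mu y l ->
     theta_flow mu y (fun k => s * th0t k) l' (T s) @[s --> (0 : R)^'+] --> (0 : R)).
Proof.
move=> mu0 y0 yl0 yl'0 bneq e0 ea c0 c'0 HT.
have a'0 : 0 < thetastar mu y l' by rewrite /thetastar divr_gt0 // sqrtr_gt0.
have b0 : 0 < ytilde mu y l by rewrite /ytilde mulr_gt0 // sqrtr_gt0.
have b'0 : 0 < ytilde mu y l' by rewrite /ytilde mulr_gt0 // sqrtr_gt0.
rewrite /theta_flow /= in HT *.
set a := thetastar mu y l in HT ea *.
set a' := thetastar mu y l' in a'0 HT *.
set b := ytilde mu y l in b0 bneq HT *.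
set b' := ytilde mu y l' in b'0 bneq HT *.
set c := th0t l in c0 HT *.
set c' := th0t l' in c'0 HT *.
set v := fun s => expR (b'/b * ln (c*eps/((a-eps)*(a-s*c)))).
have e : {near (0:R)^'+, (fun s => s*c'*a'/(s*c' - s`^(b'/b) * v s * (s*c' - a'))) =1
   (fun s => s * c' * a' / (s * c' - expR (- (2 * b' * T s)) * (s * c' - a')))}.
  near=> s.
  have s0 : 0 < s by near: s; exact: nbhs_right_gt.
  have h1 : s < (a-eps)/c by near: s; apply: nbhs_right_lt; rewrite divr_gt0 // subr_gt0.
  have h2 : s < a'/c' by near: s; apply: nbhs_right_lt; rewrite divr_gt0.
  rewrite ltr_pdivlMr // in h1; rewrite ltr_pdivlMr // in h2.
  by rewrite /= (@theta_eqs _ a eps c b b' c' a' (T s) s e0 ea s0 c0 h1 b0 (HT s s0 h1 h2)).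
have hv := @limv R (b'/b) a eps c e0 ea c0.
split => hbb.
  apply: cvg_trans; first exact: (near_eq_cvg e).
  apply: (@limA _ _ _ _ _ _ _ c'0 a'0 hv).
  by rewrite ltr_pdivlMr // mul1r.
apply: cvg_trans; first exact: (near_eq_cvg e).
apply: (@limB _ _ _ _ _ _ _ _ c'0 a'0 _ hv).
- by rewrite divr_gt0.
- by rewrite ltr_pdivrMr // mul1r.
- exact: expR_gt0.
Unshelve. all: by end_near. Qed.
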